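(* Let $Z=\mathrm{GF}(2)$ and let $K$ be an elementary abelian $2$-group, regarded as a vector space over $\mathrm{GF}(2)$ (written additively). Let $g:K^3\to\mathrm{GF}(2)$ be a trilinear form such that $g(x,x+y,y)=g(y,x+y,x)$ for all $x,y\in K$. Define $\theta:K^2\to\mathrm{GF}(2)$ by $\theta(x,y)=g(x,x+y,y)$, and let $Q=K\ltimes_\theta Z$ be the set $K\times Z$ with multiplication $(x,a)(y,b)=(x+y,\ a+b+\theta(x,y))$. Then $Q$ is a commutative A-loop of exponent $2$. Moreover, $(y,b)\in N_\mu(Q)$ if and only if $g(y,x,z)=g(x,z,y)$ for all $x,z\in K$.
   Context: A loop is a set with a binary operation and a neutral element in which all left and right translations are bijections. Its inner mapping group is generated by $L_{x,y}=L_{yx}^{-1}L_yL_x$, $R_{x,y}=R_{xy}^{-1}R_yR_x$, $T_x=L_x^{-1}R_x$; an A-loop is a loop whose inner mappings are all automorphisms. Exponent $2$ means $uu=1$ for all elements $u$. $N_\mu(Q)=\{y:(xy)z=x(yz)\ \forall x,z\}$ is the middle nucleus. *)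

(* Defs.v *)
From HB Require Import structures.
From mathcomp Require Import all_boot all_order all_algebra.
Set Implicit Arguments. Unset Strict Implicit. Unset Printing Implicit Defensive.
Import GRing.Theory.
Local Open Scope ring_scope.

Section Loops.
Variable T : Type.
Variables (op : T -> T -> T) (e : T).

Definition is_loop : Prop :=
  (forall x, op e x = x /\ op x e = x) /\
  (forall a, bijective (op a)) /\
  (forall a, bijective (fun x => op x a)).

(* ld x y = x\y (left division), rd y x = y/x (right division):
   the inverses of the left translations L_x and right translations R_x. *)
Definition divisions (ld rd : T -> T -> T) : Prop :=
  forall x y, ld x (op x y) = y /\ op x (ld x y) = y /\
              rd (op y x) x = y /\ op (rd y x) x = y.

(* Inner mapping group: generated by
     L_{x,y} = L_{yx}^{-1} L_y L_x : z |-> (yx) \ (y(xz)),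
     R_{x,y} = R_{xy}^{-1} R_y R_x : z |-> ((zx)y) / (xy),
     T_x     = L_x^{-1} R_x        : z |-> x \ (zx),
   closed under identity, composition and inverses. *)
Inductive inner_map (ld rd : T -> T -> T) : (T -> T) -> Prop :=
  | inner_L x y : inner_map ld rd (fun z => ld (op y x) (op y (op x z)))
  | inner_R x y : inner_map ld rd (fun z => rd (op (op z x) y) (op x y))
  | inner_T x : inner_map ld rd (fun z => ld x (op z x))
  | inner_id : inner_map ld rd id
  | inner_comp f h : inner_map ld rd f -> inner_map ld rd h ->
                     inner_map ld rd (f \o h)
  | inner_inv f h : inner_map ld rd f -> cancel f h -> cancel h f ->
                    inner_map ld rd h.

Definition loop_automorphism (f : T -> T) : Prop :=
  bijective f /\ forall x y, f (op x y) = op (f x) (f y).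

Definition A_loop : Prop :=
  is_loop /\
  forall ld rd, divisions ld rd ->
    forall f, inner_map ld rd f -> loop_automorphism f.

Definition loop_commutative : Prop := forall x y, op x y = op y x.

Definition exponent2 : Prop := forall u, op u u = e.

Definition middle_nucleus (y : T) : Prop :=
  forall x z, op (op x y) z = op x (op y z).

End Loops.

Definition trilinear (K : lmodType 'F_2) (g : K -> K -> K -> 'F_2) : Prop :=
  (forall (a : 'F_2) x x' y z, g (a *: x + x') y z = a * g x y z + g x' y z) /\
  (forall (a : 'F_2) x y y' z, g x (a *: y + y') z = a * g x y z + g x y' z) /\
  (forall (a : 'F_2) x y z z', g x y (a *: z + z') = a * g x y z + g x y z').

Definition semidirect_op (K : lmodType 'F_2) (theta : K -> K -> 'F_2)
  (p q : K * 'F_2) : K * 'F_2 :=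
  (p.1 + q.1, p.2 + q.2 + theta p.1 q.1).

(* Main.v *)
Require Import Defs.
From Stdlib Require Import Btauto.
From HB Require Import structures.
From mathcomp Require Import all_boot all_order all_algebra.
Import GRing.Theory.
Local Open Scope ring_scope.

Definition phi (a : 'F_2) : bool := (val a == 1%N).
Lemma F2_cases (a : 'F_2) : a = 0 \/ a = 1.
Proof. case: a => [[|[|n]] H]; [left|right|by []]; exact/val_inj. Qed.
Lemma phiD (a b : 'F_2) : phi (a + b) = xorb (phi a) (phi b).
Proof. by case: (F2_cases a) => ->; case: (F2_cases b) => ->. Qed.
Lemma phi_inj (a b : 'F_2) : phi a = phi b -> a = b.
Proof. by case: (F2_cases a) => ->; case: (F2_cases b) => ->. Qed.
Lemma phi0 : phi 0 = false. Proof. by []. Qed.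
Lemma F2xx (a : 'F_2) : a + a = 0.
Proof. by apply: phi_inj; rewrite phiD; case: (phi a). Qed.
Lemma F2sol (a s : 'F_2) : a + s = 0 -> a = s.
Proof. move/(congr1 phi); rewrite phiD phi0 => H; apply: phi_inj; move: H.
by case: (phi a); case: (phi s). Qed.

Ltac genphi := repeat match goal with |- context [phi ?t] =>
  let b := fresh "b" in move: (phi t) => b end.
Ltac f2 := apply: phi_inj; rewrite !phiD ?phi0; genphi; btauto.

Section Main.
Variable K : lmodType 'F_2.
Variable g : K -> K -> K -> 'F_2.
Hypothesis gt : trilinear g.
Hypothesis g_sym : forall x y : K, g x (x + y) y = g y (x + y) x.

Lemma gD1 x x' y z : g (x + x') y z = g x y z + g x' y z.
Proof. by have := gt.1 1 x x' y z; rewrite scale1r mul1r. Qed.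
Lemma gD2 x y y' z : g x (y + y') z = g x y z + g x y' z.
Proof. by have := gt.2.1 1 x y y' z; rewrite scale1r mul1r. Qed.
Lemma gD3 x y z z' : g x y (z + z') = g x y z + g x y z'.
Proof. by have := gt.2.2 1 x y z z'; rewrite scale1r mul1r. Qed.
Lemma g01 y z : g 0 y z = 0.
Proof. by move: (gD1 0 0 y z); rewrite addr0 F2xx. Qed.
Lemma g02 y z : g y 0 z = 0.
Proof. by move: (gD2 y 0 0 z); rewrite addr0 F2xx. Qed.
Lemma g03 y z : g y z 0 = 0.
Proof. by move: (gD3 y z 0 0); rewrite addr0 F2xx. Qed.
Lemma addKK (x : K) : x + x = 0.
Proof. by rewrite -[x]scale1r -scalerDl F2xx scale0r. Qed.
Lemma addKK' (x y : K) : x + (x + y) = y.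
Proof. by rewrite addrA addKK add0r. Qed.

Definition th (u v : K) := g u (u + v) v.
Lemma thE u v : th u v = g u u v + g u v v.
Proof. by rewrite /th gD2. Qed.
Lemma thC u v : th u v = th v u.
Proof. by rewrite /th g_sym addrC. Qed.
Lemma D x y z : th x y + th (x + y) z + th y z + th x (y + z) = g y x z + g x z y.
Proof. rewrite !thE !gD1 !gD2 !gD3; f2. Qed.

Local Notation op := (semidirect_op th).

Lemma op_comm p q : op p q = op q p.
Proof. case: p => p1 p2; case: q => q1 q2; rewrite /semidirect_op /= thC.
by congr pair; [rewrite addrC | f2]. Qed.

Lemma left_bij a : bijective (op a).
Proof.
case: a => a1 a2.
exists (fun q => (a1 + q.1, a2 + q.2 + th a1 (a1 + q.1))).
  by move=> [p1 p2]; rewrite /semidirect_op /= !addKK'; congr pair; f2.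
by move=> [p1 p2]; rewrite /semidirect_op /= !addKK'; congr pair; f2.
Qed.

Lemma is_loop_op : is_loop op (0, 0).
Proof.
split; [|split].
- move=> [x a]; rewrite /semidirect_op /= /th ?add0r ?addr0 g01 g03 ?addr0.
  by split.
- exact: left_bij.
- move=> a; case: (left_bij a) => h h1 h2; exists h => x.
    by rewrite op_comm h1.
  by rewrite op_comm h2.
Qed.

Definition Pform (f : K * 'F_2 -> K * 'F_2) := exists l : K -> 'F_2,
  (forall u v, l (u + v) = l u + l v) /\ forall p, f p = (p.1, p.2 + l p.1).

Lemma Pform_aut f : Pform f -> loop_automorphism op f.
Proof.
case=> l [la hf]; split.
  by exists f => p; rewrite !hf /= -addrA F2xx addr0; case: p.
by move=> [x a] [y b]; rewrite !hf /semidirect_op /= la; congr pair; f2.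
Qed.

Lemma inner_P ld rd : divisions op ld rd ->
  forall f, inner_map op ld rd f -> Pform f.
Proof.
move=> hd f; elim => {f}.
- move=> [x1 x2] [y1 y2].
  pose l := fun w => th y1 x1 + th (y1 + x1) w + th x1 w + th y1 (x1 + w).
  exists l.
  split.
    by move=> u v; rewrite /l !D ?gD1 ?gD2 ?gD3; f2.
  move=> [z1 z2]; cbv beta.
  have E : op (y1, y2) (op (x1, x2) (z1, z2)) =
           op (op (y1, y2) (x1, x2)) (z1, z2 + l z1).
    rewrite /semidirect_op /l /=; congr pair; first by rewrite !addrA.
    f2.
  rewrite E; exact: (hd _ _).1.
- move=> [x1 x2] [y1 y2].
  pose l := fun w => th w x1 + th (w + x1) y1 + th x1 y1 + th w (x1 + y1).
  exists l.
  split.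
    by move=> u v; rewrite /l !D ?gD1 ?gD2 ?gD3; f2.
  move=> [z1 z2]; cbv beta.
  have E : op (op (z1, z2) (x1, x2)) (y1, y2) =
           op (z1, z2 + l z1) (op (x1, x2) (y1, y2)).
    rewrite /semidirect_op /l /=; congr pair; first by rewrite !addrA.
    f2.
  rewrite E; exact: (hd _ _).2.2.1.
- move=> x; exists (fun _ => 0); split; first by move=> *; rewrite addr0.
  move=> z; cbv beta; rewrite op_comm (hd _ _).1 addr0; by case: z.
- exists (fun _ => 0); split; first by move=> *; rewrite addr0.
  by move=> [z1 z2]; rewrite addr0.
- move=> f h _ [lf [lfa hf]] _ [lh [lha hh]].
  exists (fun w => lh w + lf w); split.
    by move=> u v; rewrite lfa lha; f2.
  by move=> p /=; rewrite hh hf /= addrA.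
- move=> f h _ [l [la hf]] c1 c2.
  exists l; split => // p.
  have ffp : forall q, f (f q) = q.
    by move=> [q1 q2]; rewrite !hf /= -addrA F2xx addr0.
  by rewrite -[in LHS](ffp p) c1 hf.
Qed.

Lemma exp2 : exponent2 op (0, 0).
Proof. by move=> [x a]; rewrite /semidirect_op /= /th addKK g02 F2xx addr0. Qed.

Lemma nucleus y b :
  middle_nucleus op (y, b) <-> (forall x z : K, g y x z = g x z y).
Proof.
split.
- move=> H x z; have := H (x, 0) (z, 0).
  move/(congr1 snd); rewrite /semidirect_op /= => E.
  rewrite ?add0r ?addr0 -?addrA in E; have {}E := addrI _ E.
  apply: F2sol; rewrite -D E; f2.
- move=> H [x a] [z c]; rewrite /semidirect_op /=.
  congr pair; first by rewrite addrA.
  have D0 := D x y z; rewrite H F2xx -!addrA in D0.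
  move/F2sol: D0 => ->; f2.
Qed.

End Main.

Theorem proposition4p3 (K : lmodType 'F_2) (g : K -> K -> K -> 'F_2)
  (g_trilinear : trilinear g)
  (g_sym : forall x y : K, g x (x + y) y = g y (x + y) x) :
  let theta := fun x y : K => g x (x + y) y in
  let Qop := semidirect_op theta in
  [/\ A_loop Qop (0, 0), loop_commutative Qop, exponent2 Qop (0, 0) &
      forall (y : K) (b : 'F_2),
        middle_nucleus Qop (y, b) <-> (forall x z : K, g y x z = g x z y)].
Proof.
move=> theta Qop; split.
- split; first exact: (@is_loop_op K g g_trilinear g_sym).
  move=> ld rd hd f hf; apply: (@Pform_aut K g).
  exact: (@inner_P K g g_trilinear g_sym _ _ hd f hf).
- exact: (@op_comm K g g_sym).
- exact: (@exp2 K g g_trilinear).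
- exact: (@nucleus K g g_trilinear).
Qed.
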